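(* Let $\mathbb{F}_Q$ be a prime field, $\mathbb{F}_Q^*=\mathbb{F}_Q\setminus\{0\}$, $\sigma,\beta\in\mathbb{N}$, and $H:\{0,1\}^\sigma\to\mathbb{F}_Q$ a function with no collisions on the inputs considered. An optimized OLE tuple is generated by drawing $s_A$ and $s_{B,1},\dots,s_{B,\beta}$ uniformly from $\mathbb{F}_Q$ and $r_{B,1},\dots,r_{B,\beta}$ uniformly from $\mathbb{F}_Q^*$, all independently, and setting $r_{A,j}=(s_A+s_{B,j})/r_{B,j}$ for $j=1,\dots,\beta$ (so $r_{A,j}r_{B,j}=s_A+s_{B,j}$); Alice receives $(s_A,r_{A,1},\dots,r_{A,\beta})$ and Bob receives $((s_{B,1},r_{B,1}),\dots,(s_{B,\beta},r_{B,\beta}))$. Alice holds one element $x\in\{0,1\}^\sigma$ and Bob holds elements $y_1,\dots,y_\beta\in\{0,1\}^\sigma$. In the set comparison protocol, Alice sends $c=s_A-H(x)$ to Bob; Bob sends $d_j=(c+H(y_j)+s_{B,j})/r_{B,j}$ for each $j$ to Alice; Alice learns for each $j$ whether $x=y_j$ by checking $d_j\stackrel{?}{=}r_{A,j}$. Then this set comparison protocol is secure in the semi-honest model: there exist simulators of Bob's view (from $y_1,\dots,y_\beta$ and his OLE share) and of Alice's view (from $x$, her OLE share and her output, namely which $j$ satisfy $x=y_j$) that are identically distributed to the respective real views.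
   Context: Semi-honest security: a party's view consists of its input, its correlated randomness and all messages it receives; a protocol is secure if each party's view can be simulated from that party's input and output alone. All arithmetic is in $\mathbb{F}_Q$. *)

(* Defs.v *)
From HB Require Import structures.
From mathcomp Require Import all_boot all_order all_algebra.
Set Implicit Arguments. Unset Strict Implicit. Unset Printing Implicit Defensive.
Import Order.TTheory GRing.Theory Num.Theory.
Local Open Scope ring_scope.

Section Protocol.
Variables (Q sigma beta : nat).
Local Notation F := 'F_Q.
Local Notation Bits := (sigma.-tuple bool).

Definition Omega : finType :=
  (F * {ffun 'I_beta -> F} * {ffun 'I_beta -> F})%type.

Definition sA (w : Omega) : F := w.1.1.
Definition sB (w : Omega) : {ffun 'I_beta -> F} := w.1.2.
Definition rB (w : Omega) : {ffun 'I_beta -> F} := w.2.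

(* r_{B,j} is drawn from F_Q^* : the support of the (uniform, independent)
   draws is the set of w with all r_{B,j} nonzero. *)
Definition valid_rand (w : Omega) : bool := [forall j, rB w j != 0].

Definition ole_A (w : Omega) : F * {ffun 'I_beta -> F} :=
  (sA w, [ffun j => (sA w + sB w j) / rB w j]).
Definition ole_B (w : Omega) : {ffun 'I_beta -> F} * {ffun 'I_beta -> F} :=
  (sB w, rB w).

Definition msg_c (H : Bits -> F) (x : Bits) (w : Omega) : F := sA w - H x.
Definition msg_d (H : Bits -> F) (x : Bits) (ys : {ffun 'I_beta -> Bits})
  (w : Omega) : {ffun 'I_beta -> F} :=
  [ffun j => (msg_c H x w + H (ys j) + sB w j) / rB w j].

Definition alice_out (x : Bits) (ys : {ffun 'I_beta -> Bits}) : {ffun 'I_beta -> bool} :=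
  [ffun j => x == ys j].

Definition ViewA : finType :=
  (Bits * (F * {ffun 'I_beta -> F}) * {ffun 'I_beta -> F})%type.
Definition ViewB : finType :=
  ({ffun 'I_beta -> Bits} * ({ffun 'I_beta -> F} * {ffun 'I_beta -> F}) * F)%type.

Definition view_alice H x ys (w : Omega) : ViewA := (x, ole_A w, msg_d H x ys w).
Definition view_bob H x ys (w : Omega) : ViewB := (ys, ole_B w, msg_c H x w).

Definition prob_real (V : finType) (f : Omega -> V) (v : V) : rat :=
  (#|[set w | valid_rand w && (f w == v)]|%:R / #|[set w | valid_rand w]|%:R).

Definition no_collision (H : Bits -> F) (x : Bits) (ys : {ffun 'I_beta -> Bits}) : Prop :=
  forall u v, u \in x :: codom ys -> v \in x :: codom ys -> H u = H v -> u = v.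

End Protocol.

Definition is_distr (V : finType) (p : {ffun V -> rat}) : Prop :=
  (forall v, 0 <= p v) /\ \sum_(v : V) p v = 1.

(* Main.v *)
Require Import Defs.
From HB Require Import structures.
From mathcomp Require Import all_boot all_order all_algebra.
From mathcomp Require Import ring.
Import Order.TTheory GRing.Theory Num.Theory.
Local Open Scope ring_scope.

Set Warnings "-notation-overridden,-ambiguous-paths".
Set Implicit Arguments. Unset Strict Implicit.

Lemma card_bij (T : finType) (P R : pred T) (phi psi : T -> T) :
  cancel phi psi -> cancel psi phi -> (forall w, R (phi w) = P w) ->
  #|[set w | P w]| = #|[set w | R w]|.
Proof.
move=> c1 c2 hR.
rewrite -(card_imset _ (can_inj c1)); apply: eq_card => w.
rewrite [in RHS]inE; apply/imsetP/idP.
- by case=> u; rewrite inE => Pu ->; rewrite hR.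
- move=> Rw; exists (psi w); last by rewrite c2.
  by rewrite inE -hR c2.
Qed.

Lemma prob_real_bij Q beta (V : finType) (f g : Omega Q beta -> V) phi psi :
  cancel phi psi -> cancel psi phi ->
  (forall w, valid_rand (phi w) = valid_rand w) ->
  (forall w, g (phi w) = f w) ->
  forall v, prob_real f v = prob_real g v.
Proof.
move=> c1 c2 hv hg v; rewrite /prob_real.
congr (_%:R / _).
have := @card_bij _ (fun w => valid_rand w && (f w == v)) (fun w => valid_rand w && (g w == v)) _ _ c1 c2.
move=> ->// w /=.
by rewrite hv hg.
Qed.

Lemma valid_ne0 Q beta : #|[set w : Omega Q beta | valid_rand w]| != 0%N.
Proof.
rewrite -lt0n card_gt0; apply/set0Pn; exists (0, [ffun=> 0], [ffun=> 1]).
rewrite inE /valid_rand; apply/forallP => j.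
by rewrite /rB /= ffunE oner_neq0.
Qed.

Lemma prob_real_distr Q beta (V : finType) (f : Omega Q beta -> V) :
  is_distr [ffun v => prob_real f v].
Proof.
split.
- move=> v; rewrite ffunE /prob_real; apply: divr_ge0; exact: ler0n.
- under eq_bigr do rewrite ffunE /prob_real.
  rewrite -mulr_suml -natr_sum.
  have -> : (\sum_(v : V) #|[set w | valid_rand w && (f w == v)]|)%N
            = #|[set w : Omega Q beta | valid_rand w]|.
    rewrite -sum1_card (partition_big f predT) //=.
    apply: eq_bigr => v _; rewrite -sum1_card; apply: eq_bigl => w.
    by rewrite !inE.
  apply: divff; rewrite pnatr_eq0; exact: valid_ne0.
Qed.

Definition fakeB Q sigma beta (ys : {ffun 'I_beta -> sigma.-tuple bool})
  (w : Omega Q beta) : ViewB Q sigma beta := (ys, ole_B w, sA w).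

Definition fakeA Q sigma beta (x : sigma.-tuple bool) (o : {ffun 'I_beta -> bool})
  (w : Omega Q beta) : ViewA Q sigma beta :=
  (x, ole_A w, [ffun j => (sA w + sB w j + (~~ o j)%:R) / rB w j]).

Definition phiB Q beta (c : 'F_Q) (w : Omega Q beta) : Omega Q beta :=
  (sA w + c, sB w, rB w).

Definition phiA Q beta (d : {ffun 'I_beta -> 'F_Q}) (w : Omega Q beta) : Omega Q beta :=
  (sA w, [ffun j => if d j == 0 then sB w j else (sA w + sB w j) / d j - sA w],
         [ffun j => if d j == 0 then rB w j else rB w j / d j]).
Definition psiA Q beta (d : {ffun 'I_beta -> 'F_Q}) (w : Omega Q beta) : Omega Q beta :=
  (sA w, [ffun j => if d j == 0 then sB w j else (sA w + sB w j) * d j - sA w],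
         [ffun j => if d j == 0 then rB w j else rB w j * d j]).

Lemma phiA_can Q beta d : cancel (@phiA Q beta d) (psiA d).
Proof.
case=> [[a b] r]; rewrite /phiA /psiA /sA /sB /rB /=; congr (_, _, _);
apply/ffunP => j; rewrite !ffunE; case: eqP => // dn0.
- by field; apply/eqP.
- by field; apply/eqP.
Qed.

Lemma psiA_can Q beta d : cancel (@psiA Q beta d) (phiA d).
Proof.
case=> [[a b] r]; rewrite /phiA /psiA /sA /sB /rB /=; congr (_, _, _);
apply/ffunP => j; rewrite !ffunE; case: eqP => // dn0.
- by field; apply/eqP.
- by field; apply/eqP.
Qed.

Theorem theorem3 (Q sigma beta : nat) (HQ : prime Q)
    (H : sigma.-tuple bool -> 'F_Q) :
  (* Bob's view is simulatable from his input (y_1..y_beta); he has no output *)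
  (exists SimB : {ffun 'I_beta -> sigma.-tuple bool} -> {ffun ViewB Q sigma beta -> rat},
     (forall ys, is_distr (SimB ys)) /\
     (forall (x : sigma.-tuple bool) (ys : {ffun 'I_beta -> sigma.-tuple bool}),
        no_collision H x ys ->
        forall v, prob_real (view_bob H x ys) v = SimB ys v))
  /\
  (* Alice's view is simulatable from her input x and her output *)
  (exists SimA : sigma.-tuple bool -> {ffun 'I_beta -> bool} -> {ffun ViewA Q sigma beta -> rat},
     (forall x o, is_distr (SimA x o)) /\
     (forall (x : sigma.-tuple bool) (ys : {ffun 'I_beta -> sigma.-tuple bool}),
        no_collision H x ys ->
        forall v, prob_real (view_alice H x ys) v = SimA x (alice_out x ys) v)).
Proof.
split.
- exists (fun ys => [ffun v => prob_real (@fakeB Q sigma beta ys) v]); split.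
    by move=> ys; exact: prob_real_distr.
  move=> x ys _ v; rewrite ffunE.
  apply: (prob_real_bij (phi := phiB (- H x)) (psi := phiB (H x))).
  + by case=> [[a b] r]; rewrite /phiB /sA /sB /rB /= addrNK.
  + by case=> [[a b] r]; rewrite /phiB /sA /sB /rB /= addrK.
  + by case=> [[a b] r].
  + by case=> [[a b] r].
- exists (fun x o => [ffun v => prob_real (@fakeA Q sigma beta x o) v]); split.
    by move=> x o; exact: prob_real_distr.
  move=> x ys nc v; rewrite ffunE.
  pose d := [ffun j => H (ys j) - H x].
  have hd : forall j, (d j == 0) = (x == ys j).
    move=> j; rewrite ffunE subr_eq0; apply/eqP/eqP => [h|<-] //.
    apply: nc; rewrite ?inE ?eqxx //.
    by rewrite orbC codom_f.
  have dj : forall j, d j = H (ys j) - H x by move=> j; rewrite ffunE.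
  clearbody d.
  apply: (prob_real_bij (phi := phiA d) (psi := psiA d)).
  + exact: phiA_can.
  + exact: psiA_can.
  + case=> [[a b] r]; rewrite /valid_rand /phiA /rB /=.
    apply: eq_forallb => j; rewrite ffunE; case: (d j =P 0) => [_|/eqP dn0] //=.
    by rewrite mulf_eq0 invr_eq0 (negPf dn0) orbF.
  + case=> [[a b] r]; rewrite /fakeA /view_alice /phiA /ole_A /msg_d /msg_c
      /sA /sB /rB /=.
    congr (_, (_, _), _); apply/ffunP => j; rewrite !ffunE /alice_out.
    * case: eqP => [//|/eqP dn0].
      have [->|rn0] := eqVneq (r j) 0; first by rewrite mul0r !invr0 !mulr0.
      by field; rewrite rn0 dn0.
    * move: (dj j) => dj'; rewrite -hd.
      have -> : a - H x + H (ys j) + b j = a + b j + d j by rewrite dj'; ring.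
      case: eqP => [dn0|/eqP dn0] /=.
        by rewrite dn0 !addr0.
      have [->|rn0] := eqVneq (r j) 0; first by rewrite mul0r !invr0 !mulr0.
      by field; rewrite rn0 dn0.
Qed.
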